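(* Let $m\ge3$ be an odd integer and $q$ an odd prime, and set $n'=\left\lceil\frac{q}{q-1}\left(q^{m-1}-q^{m-2}-q^{\frac{m-3}{2}}\right)\right\rceil-q^{m-1}+q^{m-2}-q^{\frac{m-3}{2}}$. Let $\mathbf{C}$ be a $q$-ary linear $[q^{m-1},m]$ code whose set of nonzero weights is $\{q^{m-1}-q^{m-2}-q^{\frac{m-3}{2}},\,q^{m-1}-q^{m-2},\,q^{m-1}-q^{m-2}+q^{\frac{m-3}{2}}\}$. Then the code $\mathbf{C}'$ obtained from $\mathbf{C}$ by the extension construction is a minimal $[q^{m-1}+n',\ m,\ q^{m-1}-q^{m-2}-q^{\frac{m-3}{2}}]_q$ code with maximum weight $q^{m-1}-q^{m-2}+q^{\frac{m-3}{2}}+n'$, and it violates the Ashikhmin–Barg condition.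
   Context: Extension construction for a $q$-ary linear $[N,K]$ code $\mathbf{D}$ with $K\ge2$, minimum nonzero weight $w_{min}$, maximum weight $w_{max}$ and $n'=\lceil\frac{qw_{min}}{q-1}\rceil-w_{max}\ge1$: choose a basis $\mathbf{r}_1,\dots,\mathbf{r}_K$ with $wt(\mathbf{r}_1)=w_{max}$, $wt(\mathbf{r}_2)=w_{min}$, and $\mathbf{a}\in(\mathbf{F}_q^* )^{n'}$; the extended code is generated by $(\mathbf{a},\mathbf{r}_1),(\mathbf{0},\mathbf{r}_2),\dots,(\mathbf{0},\mathbf{r}_K)$ in $\mathbf{F}_q^{n'+N}$. A code is minimal if any two nonzero codewords $\mathbf{c},\mathbf{c}'$ with $supp(\mathbf{c}')\subseteq supp(\mathbf{c})$ satisfy $\mathbf{c}'=\lambda\mathbf{c}$ with $\lambda\in\mathbf{F}_q^*$. Ashikhmin–Barg condition: $w_{min}/w_{max}>(q-1)/q$. *)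

(* Defs.v *)
From HB Require Import structures.
From mathcomp Require Import all_boot all_order all_algebra all_field.
Set Implicit Arguments. Unset Strict Implicit. Unset Printing Implicit Defensive.
Import Order.TTheory GRing.Theory Num.Theory.
Local Open Scope ring_scope.

Definition supp (F : fieldType) (n : nat) (c : 'rV[F]_n) : {set 'I_n} :=
  [set i | c 0 i != 0].

Definition wt (F : fieldType) (n : nat) (c : 'rV[F]_n) : nat := #|supp c|.

Definition minimal_code (F : fieldType) (n : nat) (C : {vspace 'rV[F]_n}) : Prop :=
  forall c c' : 'rV[F]_n, c \in C -> c' \in C -> c != 0 -> c' != 0 ->
    supp c' \subset supp c -> exists2 l : F, l != 0 & c' = l *: c.

Definition ext_gens (F : fieldType) (n' N : nat) (a : 'rV[F]_n')
    (r : seq 'rV[F]_N) : seq 'rV[F]_(n' + N) :=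
  [seq (if i == 0%N then row_mx a r`_i else row_mx 0 r`_i) | i <- iota 0 (size r)].

Definition ext_code (F : fieldType) (n' N : nat) (a : 'rV[F]_n')
    (r : seq 'rV[F]_N) : {vspace 'rV[F]_(n' + N)} :=
  <<ext_gens a r>>%VS.

Definition ashikhmin_barg (q wmin wmax : nat) : Prop :=
  ((q - 1)%:R / q%:R < wmin%:R / wmax%:R :> rat).

(* Main.v *)
Require Import Defs.
From HB Require Import structures.
From mathcomp Require Import all_boot all_order all_algebra all_field.
From mathcomp Require Import zify.
Import Order.TTheory GRing.Theory Num.Theory.
Local Open Scope ring_scope.

Lemma wtE (F : fieldType) n (c : 'rV[F]_n) : wt c = (\sum_i (c 0%R i != 0%R : nat))%N.
Proof.
rewrite /wt /supp -sum1_card big_mkcond /=; apply: eq_bigr => i _.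
by rewrite inE; case: (c 0 i != 0).
Qed.

Lemma wt_row_mx (F : fieldType) n1 n2 (u : 'rV[F]_n1) (v : 'rV[F]_n2) :
  wt (row_mx u v) = (wt u + wt v)%N.
Proof.
rewrite !wtE big_split_ord; congr (_ + _)%N; apply: eq_bigr => i _.
  by rewrite row_mxEl.
by rewrite row_mxEr.
Qed.

Lemma wt_scale (F : fieldType) n (a : 'rV[F]_n) (k : F) :
  (forall i, a 0 i != 0) -> wt (k *: a) = if k == 0 then 0%N else n.
Proof.
move=> ha; rewrite wtE; case: eqP => [->|/eqP nz].
  by rewrite big1 // => i _; rewrite scale0r mxE eqxx.
under eq_bigr do rewrite mxE mulf_eq0 negb_or nz ha.
by rewrite sum_nat_const card_ord muln1.
Qed.

Lemma count_lemma (F : finFieldType) n (x y : 'rV[F]_n) :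
  supp y \subset supp x ->
  (\sum_(mu : F) wt (x - mu *: y) + wt y = #|F| * wt x)%N.
Proof.
move=> /subsetP sub.
under eq_bigr do rewrite wtE.
rewrite !wtE exchange_big -big_split big_distrr /=; apply: eq_bigr => i _.
under eq_bigr do rewrite !mxE.
have [y0|ny] := eqVneq (y 0 i) 0.
  under eq_bigr do rewrite y0 mulr0 subr0.
  rewrite sum_nat_const addn0.
  done.
have nx : x 0 i != 0.
  by have := sub i; rewrite !inE => /(_ ny).
rewrite nx /= muln1.
set k := x 0 i / y 0 i.
have E mu : (x 0 i - mu * y 0 i == 0) = (mu == k).
  by rewrite subr_eq0 eq_sym (can2_eq (mulfK ny) (divfK ny)).
have S1 : (\sum_(mu : F) (mu == k : nat))%N = 1%N.
  by rewrite (bigD1 k) //= eqxx big1 // => mu /negbTE ->.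
transitivity (\sum_(mu : F) ((x 0%R i - mu * y 0%R i)%R != 0%R : nat) + \sum_(mu : F) (mu == k : nat))%N.
  by rewrite S1.
rewrite -big_split /= -sum1_card; apply: eq_bigr => mu _.
by rewrite -E; case: (_ == 0).
Qed.

Lemma min_core (F : finFieldType) n (C : {vspace 'rV[F]_n}) (lo hi : nat) :
  (forall x, x \in C -> x != 0 -> (lo <= wt x)%N) ->
  (forall x, x \in C -> (wt x <= hi)%N) ->
  (#|F|.-1 * hi < #|F| * lo)%N ->
  forall x y, x \in C -> y \in C -> y != 0 -> supp y \subset supp x ->
  exists2 mu : F, mu != 0 & x = mu *: y.
Proof.
move=> hlo hhi hineq x y xC yC ny sub.
have [/existsP[mu /andP[nmu /eqP E]]|none] :=
  boolP [exists mu : F, (mu != 0) && (x == mu *: y)].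
  by exists mu.
exfalso.
have cnt := @count_lemma F n x y sub.
rewrite (bigD1 0) //= scale0r subr0 in cnt.
have S : (#|F|.-1 * lo <= \sum_(mu : F | mu != 0%R) wt (x - mu *: y))%N.
  have -> : (#|F|.-1 * lo = \sum_(mu : F | mu != 0%R) lo)%N.
    by rewrite sum_nat_const cardC1.
  apply: leq_sum => mu nmu; apply: hlo.
    by rewrite memvB // memvZ.
  rewrite subr_eq0; apply: contraNneq none => E.
  by apply/existsP; exists mu; rewrite nmu E eqxx.
have Ly := hlo y yC ny.
have Hx := hhi x xC.
have cF : (0 < #|F|)%N by apply/card_gt0P; exists 0.
have M : (#|F|.-1 * wt x <= #|F|.-1 * hi)%N by rewrite leq_mul2l Hx orbT.
move: hineq; rewrite ltnNge => /negP; apply.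
have E : #|F| = (#|F|.-1).+1 by rewrite prednK.
move: cnt S Ly M; rewrite E /=; set p := #|F|.-1; set w := wt x.
set s := (\sum_(_ | _) _)%N; move=> cnt S Ly M.
nia.
Qed.

Lemma ab_neg (q wmin W : nat) : (2 <= q)%N ->
  ((q * wmin)%N%:R / (q - 1)%N%:R <= W%:R :> rat) -> ~ ashikhmin_barg q wmin W.
Proof.
move=> q2 hX; rewrite /ashikhmin_barg; apply/negP; rewrite -leNgt.
have q1 : 0 < (q - 1)%N%:R :> rat by rewrite ltr0n; lia.
have q0 : 0 < q%:R :> rat by rewrite ltr0n; lia.
have [->|Wp] := posnP W.
  by rewrite invr0 mulr0 divr_ge0 // ler0n.
rewrite ler_pdivrMr ?ltr0n // mulrAC ler_pdivlMr //.
rewrite ler_pdivrMr // in hX.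
rewrite -!natrM ler_nat in hX *.
by rewrite ler_nat mulnC [X in (_ <= X)%N]mulnC.
Qed.

Lemma arith (q m : nat) : (3 <= q)%N -> (3 <= m)%N -> odd m ->
  ((q.-1) * (q ^ (m - 1) - q ^ (m - 2) + q ^ ((m - 3) %/ 2)) <
   q * (q ^ (m - 1) - q ^ (m - 2) - q ^ ((m - 3) %/ 2)))%N.
Proof.
move=> q3 m3 om.
have [j ->] : exists j, m = (j.*2 + 3)%N.
  move: (odd_double_half m); rewrite om => hm'.
  exists (m./2 - 1)%N; lia.
have -> : ((j.*2 + 3 - 3) %/ 2 = j)%N by rewrite addnK -muln2 mulnK.
have -> : (j.*2 + 3 - 1 = (j.*2 + 1).+1)%N by lia.
have -> : (j.*2 + 3 - 2 = j.*2 + 1)%N by lia.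
rewrite expnS expnD expn1 -mul2n expnM.
set t := (q ^ j)%N.
have t1 : (1 <= t)%N by rewrite expn_gt0; lia.
have -> : ((q ^ 2) ^ j = t * t)%N by rewrite -expnM mulnC expnM.
have -> : (q * (t * t * q) - t * t * q = q.-1 * (t * t * q))%N.
  by rewrite -{2}(mul1n (t * t * q)%N) -mulnBl subn1.
have hv : (2 * q * t <= q.-1 * (t * t * q))%N.
  have h2 : (2 <= q.-1)%N by lia.
  have h3 : (2 * q <= q.-1 * q)%N by rewrite leq_mul2r h2 orbT.
  have h4 : (t <= t * t)%N by rewrite -{1}(muln1 t) leq_mul2l t1 orbT.
  nia.
move: hv; set v := (q.-1 * (t * t * q))%N => hv.
nia.
Qed.

Definition extf {F : fieldType} {n' N m : nat} (a : 'rV[F]_n')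
  (r : m.-tuple 'rV[F]_N) (i0 : 'I_m) (x : 'rV[F]_N) : 'rV[F]_(n' + N) :=
  row_mx (coord r i0 x *: a) x.

Lemma extf_lin (F : fieldType) (n' N m : nat) (a : 'rV[F]_n')
  (r : m.-tuple 'rV[F]_N) (i0 : 'I_m) : linear (extf a r i0).
Proof.
move=> k u v; rewrite /extf linearP /= scalerDl -scalerA.
by rewrite scale_row_mx add_row_mx.
Qed.

HB.instance Definition _ (F : fieldType) (n' N m : nat) (a : 'rV[F]_n')
  (r : m.-tuple 'rV[F]_N) (i0 : 'I_m) :=
  GRing.isLinear.Build F 'rV[F]_N 'rV[F]_(n' + N) _ (extf a r i0) (@extf_lin F n' N m a r i0).

Lemma extfE (F : fieldType) (n' N m : nat) (a : 'rV[F]_n')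
  (r : m.-tuple 'rV[F]_N) (i0 : 'I_m) x :
  linfun (extf a r i0) x = extf a r i0 x.
Proof. by rewrite lfunE. Qed.
Theorem proposition4p9 (F : finFieldType) (q m n' : nat)
  (hq : prime q) (hqodd : odd q) (hF : #|F| = q)
  (hm : (3 <= m)%N) (hmodd : odd m)
  (hn' : (n'%:Z = Num.ceil ((q * (q ^ (m - 1) - q ^ (m - 2) - q ^ ((m - 3) %/ 2)))%N%:R
                              / (q - 1)%N%:R : rat)
                  - (q ^ (m - 1) - q ^ (m - 2) + q ^ ((m - 3) %/ 2))%N%:Z))
  (C : {vspace 'rV[F]_(q ^ (m - 1))})
  (hdim : \dim C = m)
  (hweights : forall w : nat,
      (exists c, [/\ c \in C, c != 0 & wt c = w]) <->
      w \in [:: (q ^ (m - 1) - q ^ (m - 2) - q ^ ((m - 3) %/ 2))%N;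
                (q ^ (m - 1) - q ^ (m - 2))%N;
                (q ^ (m - 1) - q ^ (m - 2) + q ^ ((m - 3) %/ 2))%N])
  (r : m.-tuple 'rV[F]_(q ^ (m - 1)))
  (hbasis : basis_of C r)
  (hr1 : wt r`_0 = (q ^ (m - 1) - q ^ (m - 2) + q ^ ((m - 3) %/ 2))%N)
  (hr2 : wt r`_1 = (q ^ (m - 1) - q ^ (m - 2) - q ^ ((m - 3) %/ 2))%N)
  (a : 'rV[F]_n') (ha : forall i, a 0 i != 0) :
  let C' := ext_code a r in
  let wmin := (q ^ (m - 1) - q ^ (m - 2) - q ^ ((m - 3) %/ 2))%N in
  let wmax := (q ^ (m - 1) - q ^ (m - 2) + q ^ ((m - 3) %/ 2) + n')%N in
  [/\ minimal_code C', \dim C' = m,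
      [/\ (exists2 c, c \in C' & (c != 0) && (wt c == wmin)),
           (forall c, c \in C' -> c != 0 -> (wmin <= wt c)%N),
           (exists2 c, c \in C' & (c != 0) && (wt c == wmax))
         & (forall c, c \in C' -> (wt c <= wmax)%N)]
    & ~ ashikhmin_barg q wmin wmax].
  (* your proof *)
Proof.
move=> C' wmin wmax.
set B := (q ^ (m - 1) - q ^ (m - 2) + q ^ ((m - 3) %/ 2))%N.
have q3 : (3 <= q)%N.
  have q2 := prime_gt1 hq.
  have : q != 2%N by apply: contraTneq hqodd => ->.
  lia.
have m0 : (0 < m)%N by lia.
have m1 : (1 < m)%N by lia.
pose i0 : 'I_m := Ordinal m0.
pose i1 : 'I_m := Ordinal m1.
case/andP: hbasis => /eqP hspan hfree.
pose f := linfun (extf a r i0).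
have fE x : f x = row_mx (coord r i0 x *: a) x by rewrite extfE.
have wtf x : wt (f x) = ((if coord r i0 x == 0%R then 0 else n') + wt x)%N.
  by rewrite fE wt_row_mx wt_scale.
have C'E : C' = (f @: C)%VS.
  rewrite /C' /ext_code -hspan limg_span; congr (span _).
  rewrite /ext_gens -[in RHS](mkseq_nth 0 r) /mkseq -map_comp size_tuple.
  apply/esym/eq_in_map => i; rewrite mem_iota add0n => /andP[_ lti] /=.
  rewrite fE (coord_free (Ordinal lti) i0 hfree) /=.
  by case: i lti => [|i] lti /=; rewrite ?scale1r ?scale0r.
have finj : injective f.
  by move=> x y; rewrite !fE => /(congr1 rsubmx); rewrite !row_mxKr.
have wC x : x \in C -> x != 0 -> (wmin <= wt x)%N && (wt x <= B)%N.
  move=> xC nx; have /hweights : exists c, [/\ c \in C, c != 0 & wt c = wt x].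
    by exists x.
  rewrite !inE => /or3P[]/eqP->; apply/andP; split => //; rewrite /wmin /B; lia.
have wC2 x : x \in C -> (wt x <= B)%N.
  move=> xC; have [->|nx] := eqVneq x 0; last by case/andP: (wC x xC nx).
  by rewrite wtE big1 // => i _; rewrite mxE eqxx.
have rC (i : 'I_m) : r`_i \in C by rewrite -hspan memv_span // mem_nth // size_tuple.
have rnz (i : 'I_m) : r`_i != 0 by apply: (free_not0 hfree); rewrite mem_nth // size_tuple.
have arith_hyp : (#|F|.-1 * B < #|F| * wmin)%N by rewrite hF; exact: arith.
split.
- rewrite C'E => c c' /memv_imgP[x xC ->] /memv_imgP[y yC ->] nfx nfy sub.
  have ny : y != 0 by apply: contraNneq nfy => ->; rewrite linear0.
  have subxy : supp y \subset supp x.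
    apply/subsetP => i; rewrite !inE => hi.
    have := subsetP sub (rshift n' i); rewrite !inE !fE !row_mxEr; exact.
  have [mu nmu xE] := @min_core F _ C wmin B (fun x xC nx => proj1 (andP (wC x xC nx))) wC2
      (arith_hyp : (#|F|.-1 * B < #|F| * wmin)%N) x y xC yC ny subxy.
  exists mu^-1; first by rewrite invr_eq0.
  by rewrite xE linearZ scalerA mulVf // scale1r.
- rewrite C'E limg_dim_eq ?hdim //.
  have /eqP -> : lker f == 0%VS by apply/lker0P.
  by rewrite capv0.
- split.
  + exists (f r`_1); first by rewrite C'E memv_img // (rC i1).
    rewrite wtf (coord_free i1 i0 hfree) /= eqxx add0n hr2 eqxx andbT.
    apply: contraNneq (rnz i1) => h; apply/eqP/finj; by rewrite h linear0.
  + rewrite C'E => c /memv_imgP[x xC ->] nfx.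
    have nx : x != 0 by apply: contraNneq nfx => ->; rewrite linear0.
    by rewrite wtf; case/andP: (wC x xC nx) => h _; apply: leq_trans h (leq_addl _ _).
  + exists (f r`_0); first by rewrite C'E memv_img // (rC i0).
    rewrite wtf (coord_free i0 i0 hfree) eqxx oner_eq0 hr1 /wmax -/B (addnC n' B) eqxx andbT.
    apply: contraNneq (rnz i0) => h; apply/eqP/finj; by rewrite h linear0.
  + rewrite C'E => c /memv_imgP[x xC ->].
    rewrite wtf /wmax -/B (addnC B n') leq_add ?wC2 //; by case: ifP.
- apply: ab_neg; first lia.
  have hW : (wmax%:Z = Num.ceil ((q * wmin)%N%:R / (q - 1)%N%:R : rat)).
    by rewrite /wmax PoszD hn' addrC subrK.
  apply: le_trans (Num.Theory.ceil_ge _) _.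
  by rewrite -hW.
Qed.
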